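(* Let $L$ be a sublattice of $A_n$ of rank $n$. For every $p\in L$, the Voronoi cell $V_\triangle(p)$ equals $\mathrm{pr}_0\big(\{x\in\mathbb R^{n+1}:x\le p\}\cap\partial\Sigma^c(L)\big)$. Consequently the Voronoi diagram of $L$ under $d_\triangle$ is the projection of $\partial\Sigma^c(L)$ onto $H_0$ along $(1,\dots,1)$.
   Context: Let $n\ge 1$, $H_0=\{x\in\mathbb R^{n+1}:\sum_i x_i=0\}$ and $A_n=H_0\cap\mathbb Z^{n+1}$. For $x\in\mathbb R^{n+1}$, $\deg(x)=\sum_i x_i$, and $\mathrm{pr}_0(x)=x-\frac{\deg(x)}{n+1}(1,\dots,1)$. Write $x\le y$ iff $x_i\le y_i$ for all $i$. Let $\Sigma^{\mathbb R}(L)=\{x\in\mathbb R^{n+1}: x\not\le q\text{ for all }q\in L\}$ and let $\Sigma^c(L)$ be its topological closure in $\mathbb R^{n+1}$. For $p,q\in H_0$ let $d_\triangle(p,q)=\max_i(p_i-q_i)$. For $p\in L$, the Voronoi cell is $V_\triangle(p)=\{x\in H_0: d_\triangle(x,p)\le d_\triangle(x,p')\ \forall p'\in L\}$. *)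

(* Defs.v *)
From mathcomp Require Import all_boot.
From Stdlib Require Import Reals.
Open Scope R_scope.

Definition vec (n : nat) := 'I_n.+1 -> R.

Definition deg {n : nat} (x : vec n) : R := \big[Rplus/0]_(i < n.+1) x i.

Definition inH0 {n : nat} (x : vec n) : Prop := deg x = 0.

Definition pr0 {n : nat} (x : vec n) : vec n :=
  fun i => x i - deg x / INR n.+1.

Definition leV {n : nat} (x y : vec n) : Prop := forall i, x i <= y i.

(* L is a sublattice of A_n: a subgroup of (Z^{n+1}, +) contained in H_0 *)
Definition sublattice_An (n : nat) (L : vec n -> Prop) : Prop :=
  L (fun _ => 0) /\
  (forall p q, L p -> L q -> L (fun i => p i - q i)) /\
  (forall p, L p -> (forall i, exists z : Z, p i = IZR z) /\ inH0 p).

Definition has_rank (n : nat) (L : vec n -> Prop) : Prop :=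
  exists v : 'I_n -> vec n,
    (forall k, L (v k)) /\
    (forall c : 'I_n -> R,
        (forall j, \big[Rplus/0]_(k < n) (c k * v k j) = 0) -> forall k, c k = 0).

Definition SigmaR {n : nat} (L : vec n -> Prop) (x : vec n) : Prop :=
  forall q, L q -> ~ leV x q.

(* topology of R^{n+1} (sup-norm balls; equivalent to the Euclidean topology) *)
Definition closure {n : nat} (S : vec n -> Prop) (x : vec n) : Prop :=
  forall eps, 0 < eps -> exists y, S y /\ forall i, Rabs (x i - y i) < eps.

Definition interior {n : nat} (S : vec n -> Prop) (x : vec n) : Prop :=
  exists eps, 0 < eps /\ forall y, (forall i, Rabs (y i - x i) < eps) -> S y.

Definition boundary {n : nat} (S : vec n -> Prop) (x : vec n) : Prop :=
  closure S x /\ ~ interior S x.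

Definition Sigmac {n : nat} (L : vec n -> Prop) : vec n -> Prop := closure (SigmaR L).

Definition dtri {n : nat} (p q : vec n) : R :=
  \big[Rmax/(p ord0 - q ord0)]_(i < n.+1) (p i - q i).

Definition Voronoi {n : nat} (L : vec n -> Prop) (p : vec n) (x : vec n) : Prop :=
  inH0 x /\ forall p', L p' -> dtri x p <= dtri x p'.

(* Main.v *)
Require Import Defs.
From mathcomp Require Import all_boot.
From Stdlib Require Import Reals Lra Lia Classical FunctionalExtensionality.
Open Scope R_scope.

Lemma bigE (m : nat) (op : R -> R -> R) (a : R) (F : 'I_m -> R) :
  \big[op/a]_(i < m) F i = foldr (fun i acc => op (F i) acc) a (index_enum 'I_m).
Proof. by rewrite unlock. Qed.

Lemma sz m : size (index_enum 'I_m) = m.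
Proof. have := deprecated_filter_index_enum (T:='I_m) predT. rewrite filter_predT => ->. by rewrite -cardE card_ord. Qed.

Lemma foldr_shift (m : nat) (f : 'I_m -> R) t (l : seq 'I_m) :
  foldr (fun i acc => (f i - t) + acc) 0 l =
  foldr (fun i acc => f i + acc) 0 l - INR (size l) * t.
Proof.
elim: l => [|a l IH]; first by rewrite /=; ring.
change (foldr (fun i acc => (f i - t) + acc) 0 (a :: l)) with ((f a - t) + foldr (fun i acc => (f i - t) + acc) 0 l).
change (foldr (fun i acc => f i + acc) 0 (a :: l)) with (f a + foldr (fun i acc => f i + acc) 0 l).
change (size (a :: l)) with (size l).+1.
rewrite IH S_INR; ring.
Qed.

Lemma deg_shift (n : nat) (f : vec n) t :
  deg (fun i => f i - t) = deg f - INR n.+1 * t.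
Proof. by rewrite /deg !bigE foldr_shift sz. Qed.

Lemma foldr_max_ge (m : nat) (F : 'I_m -> R) a (l : seq 'I_m) i :
  i \in l -> F i <= foldr (fun j acc => Rmax (F j) acc) a l.
Proof.
elim: l => [|b l IH] //=. rewrite in_cons; case/orP => [/eqP ->|Hi].
- apply Rmax_l.
- eapply Rle_trans; [apply IH; exact Hi| apply Rmax_r].
Qed.

Lemma foldr_max_le (m : nat) (F : 'I_m -> R) a (l : seq 'I_m) t :
  a <= t -> (forall i, F i <= t) -> foldr (fun j acc => Rmax (F j) acc) a l <= t.
Proof.
move=> Ha HF; elim: l => [|b l IH] //=. by apply Rmax_lub.
Qed.

Lemma dtri_ge {n : nat} (x p : vec n) i : x i - p i <= dtri x p.
Proof. rewrite /dtri bigE. apply (@foldr_max_ge n.+1 (fun j => x j - p j)), mem_index_enum. Qed.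

Lemma dtri_le {n : nat} (x p : vec n) t : (forall i, x i - p i <= t) -> dtri x p <= t.
Proof. move=> H. rewrite /dtri bigE. by apply (@foldr_max_le n.+1 (fun j => x j - p j)). Qed.

Lemma min_lemma (m : nat) (P : 'I_m -> R -> Prop) :
  (forall i e e', 0 < e' -> e' <= e -> P i e -> P i e') ->
  (forall i, exists e, 0 < e /\ P i e) -> exists e, 0 < e /\ forall i, P i e.
Proof.
move=> Hd Hex.
have: forall l : seq 'I_m, exists e, 0 < e /\ forall i, i \in l -> P i e.
  elim => [|a l [e [He IH]]].
  - exists 1; split; [lra| by []].
  - have [e1 [He1 Pa]] := Hex a.
    exists (Rmin e1 e); split; first by apply Rmin_pos.
    move=> i; rewrite in_cons; case/orP => [/eqP ->|Hi].
    + apply: (Hd a e1) => //; [by apply Rmin_pos | apply Rmin_l].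
    + apply: (Hd i e) => //; [by apply Rmin_pos | apply Rmin_r | by apply IH].
move=> /(_ (index_enum 'I_m)) [e [He H]]. exists e; split => // i.
apply H, mem_index_enum.
Qed.

Lemma int_gap (y : R) : exists eps, 0 < eps /\
  forall k : Z, y - eps < IZR k -> y <= IZR k.
Proof.
destruct (archimed y) as [H1 H2].
destruct (Req_dec y (IZR (up y) - 1)) as [E|E].
- exists 1; split; [lra|]. move=> k Hk.
  have H3 : IZR (up y - 2) < IZR k by rewrite minus_IZR; lra.
  apply lt_IZR in H3.
  have H4 : IZR (up y - 1) <= IZR k by apply IZR_le; lia.
  rewrite minus_IZR in H4; lra.
- have Hy : IZR (up y) - 1 < y by lra.
  exists (y - (IZR (up y) - 1)); split; [lra|]. move=> k Hk.
  have H3 : IZR (up y - 1) < IZR k by rewrite minus_IZR; lra.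
  apply lt_IZR in H3.
  have H4 : IZR (up y) <= IZR k by apply IZR_le; lia.
  lra.
Qed.

Lemma clos_self {n : nat} (S : vec n -> Prop) y : S y -> Defs.closure S y.
Proof.
move=> Hy eps He. exists y; split => // i.
replace (y i - y i) with 0 by ring. rewrite Rabs_R0; lra.
Qed.

Lemma part1 {n : nat} (L : vec n -> Prop) p (Lp : L p) x :
  Voronoi L p x <-> exists y, leV y p /\ boundary (Sigmac L) y /\ pr0 y = x.
Proof.
have Hn : 0 < INR n.+1 by apply lt_0_INR; lia.
split.
- move=> [H0 Hv]. set t := dtri x p.
  exists (fun i => x i - t). split; [|split; [split|]].
  + move=> i /=. have := dtri_ge x p i. rewrite -/t. lra.
  + apply clos_self. move=> eps He. exists (fun i => x i - t + eps/2). split.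
    * move=> q Lq Hle. have := Hv q Lq.
      have : dtri x q <= t - eps/2.
        apply dtri_le => i. have := Hle i. simpl. lra.
      rewrite -/t. lra.
    * move=> i. apply Rabs_def1; lra.
  + move=> [eps [He Hint]].
    have Hc := Hint (fun i => x i - t - eps/2) (fun i => ltac:(apply Rabs_def1; lra)).
    destruct (Hc (eps/2)) as [w [Hw Hd]]; first lra.
    apply (Hw p Lp) => i. have := Hd i. move/Rabs_def2 => [A B].
    have := dtri_ge x p i. rewrite -/t. lra.
  + apply functional_extensionality => i. rewrite /pr0 deg_shift.
    rewrite /inH0 in H0. rewrite H0. field. lra.
- move=> [y [Hle [[Hcl Hni] Hpr]]]. subst x.
  set c := deg y / INR n.+1.
  have Epr : forall i, pr0 y i = y i - c by [].
  split.
  + rewrite /inH0. have -> : pr0 y = (fun i => y i - c) by [].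
    rewrite deg_shift /c. field. lra.
  + move=> p' Lp'. apply Rnot_lt_le => Hlt.
    have Hdp : dtri (pr0 y) p <= - c.
      apply dtri_le => i. rewrite Epr. have := Hle i. lra.
    set e := - c - dtri (pr0 y) p'.
    have He : 0 < e by rewrite /e; lra.
    destruct (Hcl (e/2)) as [z [Hz Hd]]; first lra.
    destruct (Hz (e/2)) as [w [Hw Hd2]]; first lra.
    apply (Hw p' Lp') => i.
    have := dtri_ge (pr0 y) p' i. rewrite Epr.
    have := Hd i. move/Rabs_def2 => [A B].
    have := Hd2 i. move/Rabs_def2 => [C D].
    move=> H1. have Ee : e = - c - dtri (pr0 y) p' by []. clearbody e c. lra.
Qed.

Theorem mainTheorem11 (n : nat) (L : vec n -> Prop) :
  (1 <= n)%nat ->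
  sublattice_An n L -> has_rank n L ->
  (forall p : vec n, L p ->
     forall x : vec n,
       Voronoi L p x <->
       exists y : vec n, leV y p /\ boundary (Sigmac L) y /\ pr0 y = x) /\
  (forall x : vec n,
     (exists p, L p /\ Voronoi L p x) <->
     exists y : vec n, boundary (Sigmac L) y /\ pr0 y = x).
Proof.
move=> _ [_ [_ Hsub]] _. split.
- move=> p Lp x. by apply part1.
- move=> x. split.
  + move=> [p [Lp Hv]]. have [y [_ [Hb Hpr]]] := proj1 (part1 L p Lp x) Hv.
    by exists y.
  + move=> [y [Hb Hpr]].
    destruct (classic (exists q, L q /\ leV y q)) as [[q [Lq Hq]]|Hn].
    * exists q; split => //. apply (proj2 (part1 L q Lq x)). by exists y.
    * exfalso. apply (proj2 Hb).
      have [eps [He Hg]] := @min_lemma n.+1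
        (fun i e => forall k : Z, y i - e < IZR k -> y i <= IZR k)
        (fun i e e' _ Hle H k Hk => H k ltac:(lra))
        (fun i => int_gap (y i)).
      exists eps; split => // z Hz. apply clos_self.
      move=> q Lq Hzq. apply Hn. exists q; split => // i.
      have [k Ek] := (proj1 (Hsub q Lq)) i.
      rewrite Ek. apply Hg. rewrite -Ek.
      have := Hz i. move/Rabs_def2 => [A B]. have := Hzq i. lra.
Qed.
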